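(* Fix an even integer $m$ and an integer $r\ge 0$ with $m-2r\ge0$, and put $\ell_n=\frac{n-m}2+r$ for even $n$. For $y\in\mathbb C$ let $$Q_{n(+)}(y)=Q_{n(+)}(y|A_1,\dots,A_{\ell_n}|B_1,\dots,B_n)=\frac{\prod_{a=r+1}^{\ell_n}(1-A_a^2e^{2y})}{\prod_{j=1}^n(1-B_je^y)}.$$ Consider a family of polynomials $P_n(A_1,\dots,A_{\ell_n}|B_1,\dots,B_n)$ in the $A_a$ whose coefficients are symmetric Laurent polynomials in the $B_j$, and suppose there exist polynomials $\tilde P_n=\tilde P_n(A_1,\dots,A_{\ell_n}|B_1,\dots,B_{n-2}|B)$ and $\overline P_n=\overline P_n(A_1,\dots,A_{\ell_n}|B_1,\dots,B_{n-2}|B)$ in the $A_a$ and constants $d_n$ such that (1) $P_n(A_1,\dots,A_{\ell_n}|B_1,\dots,B_{n-2},B,-B)=\prod_{a=1}^r(1-A_a^2B^{-2})\,\tilde P_n$; (2) $\mathrm{Asym}\{\tilde P_n\}=\mathrm{Asym}\{\prod_{a=r+1}^{\ell_n-1}(1-A_a^2B^{-2})\,\overline P_n\}$; (3) $\overline P_n(A_1,\dots,A_{\ell_n-1},\pm B|B_1,\dots,B_{n-2}|B)=\pm B^{n-1}d_nP_{n-2}(A_1,\dots,A_{\ell_n-1}|B_1,\dots,B_{n-2})$, where Asym denotes antisymmetrization with respect to $A_{r+1},\dots,A_{\ell_n}$. Then $P^{new}_n=P_nQ_{n(+)}(y)$ is symmetric in the $B_j$ and satisfies (1), (2), (3) (with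 $P_n,P_{n-2}$ replaced by $P^{new}_n,P^{new}_{n-2}$) for appropriate $\tilde P^{new}_n$ and $\overline P^{new}_n$.
   Context: Antisymmetrization of a function $f$ of variables $A_{r+1},\dots,A_{\ell_n}$ means $\sum_{\sigma}\mathrm{sgn}(\sigma)\,f(A_{\sigma(r+1)},\dots,A_{\sigma(\ell_n)})$ over permutations $\sigma$ of $\{r+1,\dots,\ell_n\}$. *)

(* Defs.v *)
From HB Require Import structures.
From mathcomp Require Import all_boot all_order all_algebra all_fingroup.
From mathcomp Require Import mpoly.
Set Implicit Arguments. Unset Strict Implicit. Unset Printing Implicit Defensive.
Import GRing.Theory.
Local Open Scope ring_scope.

Definition ell (m r n : nat) : nat := ((n - m)./2 + r)%N.

(* (v_1, ..., v_k, b) as a vector of length l (intended l = k+1):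
   entries of index < k are taken from v, the remaining one is b. *)
Definition ext1 (F : Type) (k l : nat) (v : 'I_k -> F) (b : F) : 'I_l -> F :=
  fun i => if (insub (val i) : option 'I_k) is Some j then v j else b.

(* (v_1, ..., v_k, b1, b2) as a vector of length l (intended l = k+2). *)
Definition ext2 (F : Type) (k l : nat) (v : 'I_k -> F) (b1 b2 : F) : 'I_l -> F :=
  fun i => if (insub (val i) : option 'I_k) is Some j then v j
           else if val i == k then b1 else b2.

(* Antisymmetrization of p in the variables with (0-based) index >= r,
   i.e. A_{r+1}, ..., A_k in the paper's 1-based numbering. *)
Definition Asym (F : fieldType) (k r : nat) (p : {mpoly F[k]}) : {mpoly F[k]} :=
  \sum_(s : 'S_k | [forall i : 'I_k, (val i < r)%N ==> (s i == i)])
     (-1) ^+ (odd_perm s) *: msym s p.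

(* Numerator of Q_{n(+)} with e^y = x : prod_{a=r+1}^{ell_n} (1 - A_a^2 x^2). *)
Definition Qnum (F : fieldType) (k r : nat) (x : F) : {mpoly F[k]} :=
  \prod_(i : 'I_k | (r <= val i)%N) (1 - (x ^+ 2) *: 'X_i ^+ 2).

Definition Qden (F : fieldType) (n : nat) (Bs : 'I_n -> F) (x : F) : F :=
  \prod_(j : 'I_n) (1 - Bs j * x).

Definition Pnew (F : fieldType) (m r : nat) (x : F)
  (P : forall n, ('I_n -> F) -> {mpoly F[ell m r n]}) (n : nat) (Bs : 'I_n -> F)
  : {mpoly F[ell m r n]} :=
  (Qden Bs x)^-1 *: (P n Bs * Qnum (ell m r n) r x).

Definition props123 (F : fieldType) (m r : nat)
  (P : forall n, ('I_n -> F) -> {mpoly F[ell m r n]})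
  (Pt Pb : forall n, ('I_(n - 2) -> F) -> F -> {mpoly F[ell m r n]})
  (d : nat -> F) (n : nat) (Bs : 'I_(n - 2) -> F) (B : F) : Prop :=
  [/\ P n (ext2 Bs B (- B)) =
        (\prod_(i : 'I_(ell m r n) | (val i < r)%N) (1 - (B ^- 2) *: 'X_i ^+ 2))
        * Pt n Bs B,
      Asym r (Pt n Bs B) =
        Asym r ((\prod_(i : 'I_(ell m r n) | (r <= val i < ell m r n - 1)%N)
                   (1 - (B ^- 2) *: 'X_i ^+ 2)) * Pb n Bs B)
    & forall A' : 'I_(ell m r (n - 2)%N) -> F,
        (Pb n Bs B).@[ext1 A' B] = B ^+ (n - 1) * d n * (P (n - 2)%N Bs).@[A']
        /\ (Pb n Bs B).@[ext1 A' (- B)] = - (B ^+ (n - 1) * d n * (P (n - 2)%N Bs).@[A'])].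

Arguments props123 {F m r} P Pt Pb d n Bs B.
Arguments Pnew {F m r} x P n Bs.

(* Main.v *)
Require Import Defs.
From HB Require Import structures.
From mathcomp Require Import all_boot all_order all_algebra all_fingroup.
From mathcomp Require Import mpoly.
From mathcomp Require Import ring zify.
Import GRing.Theory.
Local Open Scope ring_scope.

Section H.
Variable F : fieldType.

Lemma AsymZ k r c (p : {mpoly F[k]}) : Asym r (c *: p) = c *: Asym r p.
Proof.
rewrite /Asym scaler_sumr; apply: eq_bigr => s _.
by rewrite msymZ !scalerA mulrC.
Qed.

Lemma Asym_mulr k r (p q : {mpoly F[k]}) :
  (forall s : 'S_k, [forall i : 'I_k, (val i < r)%N ==> (s i == i)] -> msym s q = q) ->
  Asym r (p * q) = Asym r p * q.
Proof.
move=> Hq; rewrite /Asym mulr_suml; apply: eq_bigr => s Hs.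
by rewrite msymM Hq // scalerAl.
Qed.

Lemma msymXi k (s : 'S_k) (i : 'I_k) : msym s ('X_i : {mpoly F[k]}) = 'X_(s i).
Proof. by rewrite /msym mmapX mmap1U. Qed.

Lemma Qnum_sym k r (x : F) (s : 'S_k) :
  [forall i : 'I_k, (val i < r)%N ==> (s i == i)] -> msym s (Qnum k r x) = Qnum k r x.
Proof.
move=> /forallP Hs; rewrite /Qnum rmorph_prod /=.
have Hp : forall i : 'I_k, (r <= s i)%N = (r <= i)%N.
  move=> i; case: (ltnP i r) => hi.
    by have := Hs i; rewrite hi /= => /eqP ->; rewrite leqNgt hi.
  case: (ltnP (s i) r) => // hsi.
  have := Hs (s i); rewrite hsi /= => /eqP /perm_inj E.
  by move: hi; rewrite -E leqNgt hsi.
rewrite [RHS](reindex_inj (@perm_inj _ s)) /=.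
apply: eq_big => [i|i _]; first by rewrite Hp.
by rewrite msymB msym1 msymZ rmorphXn /= msymXi.
Qed.

Lemma Qnum_ext1 k l r (x : F) (A' : 'I_k -> F) b : l = k.+1 -> (r <= k)%N ->
  (Qnum l r x).@[ext1 A' b] = (Qnum k r x).@[A'] * (1 - x ^+ 2 * b ^+ 2).
Proof.
move=> El Hr; rewrite /Qnum !rmorph_prod /=.
pose h (n : nat) := if (insub n : option 'I_k) is Some j then A' j else b.
pose G (n : nat) := if (r <= n)%N then 1 - x ^+ 2 * h n ^+ 2 else 1.
transitivity (\prod_(0 <= i < l) G i).
  rewrite big_mkord [LHS]big_mkcond /=; apply: eq_bigr => i _.
  by rewrite /G; case: ifP => _ //; rewrite mevalB meval1 mevalZ rmorphXn /= mevalXU.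
transitivity ((\prod_(0 <= i < k) G i) * G k); first by rewrite El big_nat_recr.
congr (_ * _).
  rewrite big_mkord [RHS]big_mkcond /=; apply: eq_bigr => i _.
  rewrite /G /h (insubT (fun j => (j < k)%N) (ltn_ord i)) /=; case: ifP => _ //.
  rewrite mevalB meval1 mevalZ rmorphXn /= mevalXU.
  by congr (_ - _ * _ ^+ 2); congr (A' _); apply: val_inj.
by rewrite /G Hr /h insubN ?ltnn.
Qed.

Lemma Qden_ext2 k n (Bs : 'I_k -> F) B (x : F) : n = k.+2 ->
  Qden (ext2 (l:=n) Bs B (- B)) x = Qden Bs x * (1 - B ^+ 2 * x ^+ 2).
Proof.
move=> En; rewrite /Qden.
pose h (i : nat) := if (insub i : option 'I_k) is Some j then Bs j
           else if i == k then B else - B.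
transitivity (\prod_(0 <= i < n) (1 - h i * x)).
  by rewrite big_mkord.
rewrite En !big_nat_recr //= -mulrA; congr (_ * _).
  rewrite big_mkord; apply: eq_bigr => i _.
  by rewrite /h (insubT (fun j => (j < k)%N) (ltn_ord i)) /=; congr (1 - Bs _ * x); apply: val_inj.
rewrite /h !insubN ?ltnn ?ltnNge ?leqnSn // eqxx.
rewrite ifN; last by rewrite -{2}(addn0 k) -addn1 eqn_add2l.
by rewrite mulNr opprK; ring.
Qed.
End H.

Lemma ell_S m r n : (m + 2 <= n)%N -> ell m r n = (ell m r (n - 2)).+1.
Proof.
move=> h; rewrite /ell.
have -> : (n - m = (n - 2 - m).+2)%N by lia.
by rewrite /= addSn.
Qed.

Theorem proposition5 (F : fieldType) (m r : nat) (x : F)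
  (P : forall n, ('I_n -> F) -> {mpoly F[ell m r n]})
  (Pt Pb : forall n, ('I_(n - 2) -> F) -> F -> {mpoly F[ell m r n]})
  (d : nat -> F) :
  ~~ odd m -> (2 * r <= m)%N ->
  (* coefficients of P_n are symmetric in the B_j *)
  (forall n, ~~ odd n -> (m <= n)%N ->
     forall (Bs : 'I_n -> F) (s : 'S_n), (forall j, Bs j != 0) ->
       P n (fun j => Bs (s j)) = P n Bs) ->
  (* hypotheses (1), (2), (3) *)
  (forall n, ~~ odd n -> (m + 2 <= n)%N ->
     forall (Bs : 'I_(n - 2) -> F) (B : F), (forall j, Bs j != 0) -> B != 0 ->
       props123 P Pt Pb d n Bs B) ->
  (* conclusion: P^new = P * Q_{n(+)} is symmetric in the B_j ... *)
  (forall n, ~~ odd n -> (m <= n)%N ->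
     forall (Bs : 'I_n -> F) (s : 'S_n), (forall j, Bs j != 0) ->
       Pnew x P n (fun j => Bs (s j)) = Pnew x P n Bs)
  /\
  (* ... and satisfies (1), (2), (3) (away from the poles of Q) *)
  (exists Ptn Pbn : forall n, ('I_(n - 2) -> F) -> F -> {mpoly F[ell m r n]},
     forall n, ~~ odd n -> (m + 2 <= n)%N ->
     forall (Bs : 'I_(n - 2) -> F) (B : F), (forall j, Bs j != 0) -> B != 0 ->
       (forall j, 1 - Bs j * x != 0) -> 1 - B ^+ 2 * x ^+ 2 != 0 ->
       props123 (Pnew x P) Ptn Pbn d n Bs B).
Proof.
move=> hm hr HP Hpr; split.
  move=> n hn hmn Bs s hB; rewrite /Pnew HP //; congr (_^-1 *: _).
  by rewrite /Qden [RHS](reindex_inj (@perm_inj _ s)).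
exists (fun n Bs B => (Qden (ext2 (l:=n) Bs B (-B)) x)^-1 *: (Pt n Bs B * Qnum (ell m r n) r x)).
exists (fun n Bs B => (Qden (ext2 (l:=n) Bs B (-B)) x)^-1 *: (Pb n Bs B * Qnum (ell m r n) r x)).
move=> n hn hmn Bs B hBs hB hBx hB2.
have [H1 H2 H3] := Hpr n hn hmn Bs B hBs hB.
have Qs := fun s => @Qnum_sym F (ell m r n) r x s.
split.
- by rewrite /Pnew H1 -scalerAr mulrA.
- rewrite AsymZ (@Asym_mulr F _ _ _ _ Qs) H2 -scalerAr mulrA AsymZ (@Asym_mulr F _ _ _ _ Qs).
  done.
- move=> A'.
  have El : ell m r n = (ell m r (n - 2)).+1 by apply: ell_S.
  have hrk : (r <= ell m r (n - 2))%N by rewrite /ell leq_addl.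
  have En : n = (n - 2).+2 by lia.
  have [E1 E2] := H3 A'.
  rewrite /Pnew !mevalZ !mevalM E1 E2 (@Qnum_ext1 F _ _ _ _ _ _ El hrk) (@Qnum_ext1 F _ _ _ _ _ _ El hrk) (@Qden_ext2 F _ _ _ _ _ En) sqrrN.
  have hQ : Qden Bs x != 0 by apply/prodf_neq0 => j _; exact: hBx j.
  have h2 : 1 - (B * x) ^+ 2 != 0 by rewrite exprMn.
  by split; field; rewrite hQ h2.
Qed.
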